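(* Let $F$ be a rooted forest, let $U_1,U_2$ be a partition of $V(F)$ into convex subsets, and let $m_1,m_2\in\mathbb{N}_0$. Then $\mathrm{OPTZ}(F[U_1],m_1)+\mathrm{OPTZ}(F[U_2],m_2)\le\mathrm{OPTZ}(F,m_1+m_2)$.
   Context: A set $U\subseteq V(F)$ is convex if any two vertices of $U$ connected in $F$ are also connected in the induced subforest $F[U]$. A tree-sum data structure is initialized with a weighted rooted forest $(F,w)$ with weights in a commutative group $G$ (some vertices may be auxiliary: weight $0$, no operation applies to them) and processes online $\textsf{cut}(v)$ (delete the edge from $v$ to its parent; legal only if $v$ is not a root), $\textsf{update-weight}(v,x)$ and $\textsf{tree-sum}(v)$ (sum of weights of the tree of the current forest containing $v$), in the group model (group elements may only be added and subtracted, no other inspection; correct for every commutative group). An initial-zero tree-sum data structure is one that only accepts initial forests in which all weights are zero. $\mathrm{OPTZ}(F,m)$ is the minimum, over initial-zero tree-sum data structures $D$, of the maximum number of group additions and subtractions $D$ performs when executing a legal sequence of $m$ operations starting from $F$ with zero weights, maximized over operation sequences. *)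

(* Defs.v *)
From HB Require Import structures.
From mathcomp Require Import all_boot all_algebra.
From Stdlib Require Import ClassicalEpsilon.
Set Implicit Arguments. Unset Strict Implicit. Unset Printing Implicit Defensive.
Import GRing.Theory.

Section Defs.
Variable V : finType.

(* A rooted forest: a vertex set and a parent map (None = root). *)
Record rforest := RForest { fverts : {set V}; fpar : V -> option V }.

(* Well-formedness: parents stay in the vertex set, and following parents
   from any vertex eventually reaches a root (no cycles). *)
Definition is_rforest (F : rforest) : Prop :=
  (forall u p, u \in fverts F -> fpar F u = Some p -> p \in fverts F) /\
  (forall u, u \in fverts F ->
     exists n, iter n (fun o => obind (fpar F) o) (Some u) = None).

Definition fedge (F : rforest) : rel V := fun a b =>
  [&& a \in fverts F, b \in fverts F &
      (fpar F a == Some b) || (fpar F b == Some a)].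

Definition fconnected (F : rforest) (u v : V) : bool := connect (fedge F) u v.

Definition induced (F : rforest) (U : {set V}) : rforest :=
  RForest (fverts F :&: U)
    (fun u => if u \in U then
                match fpar F u with
                | Some p => if p \in U then Some p else None
                | None => None end
              else None).

Definition convex (F : rforest) (U : {set V}) : Prop :=
  forall u v, u \in U -> v \in U -> fconnected F u v -> fconnected (induced F U) u v.

(* Operations (the value x of update-weight(v,x) is supplied separately). *)
Inductive op := Cut of V | Upd of V | Query of V.

Definition is_cut (u : V) (o : op) : bool := if o is Cut w then w == u else false.

Definition cur (F : rforest) (s : seq op) (t : nat) : rforest :=
  RForest (fverts F) (fun u => if has (is_cut u) (take t s) then None else fpar F u).

Definition legal (F : rforest) (s : seq op) : Prop :=
  forall t, match onth s t with
            | Some (Cut v) => v \in fverts F /\ fpar (cur F s t) v <> None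
            | Some (Upd v) | Some (Query v) => v \in fverts F
            | None => True
            end.

(* Only IAdd/ISub
   (group additions/subtractions) are charged; copying, zeroing and reading the
   argument x of the current update-weight are free. *)
Inductive instr :=
| IAdd of nat & nat & nat
| ISub of nat & nat & nat
| ICopy of nat & nat
| IZero of nat
| IInput of nat.            (* c := x (argument of current update-weight) *)

Definition cost_instr (i : instr) : nat :=
  match i with IAdd _ _ _ | ISub _ _ _ => 1 | _ => 0 end.

Definition setm (G : zmodType) (m : nat -> G) (c : nat) (y : G) : nat -> G :=
  fun k => if k == c then y else m k.

Definition exec (G : zmodType) (x : G) (m : nat -> G) (i : instr) : nat -> G :=
  match i with
  | IAdd a b c => setm m c (m a + m b)%R
  | ISub a b c => setm m c (m a - m b)%R
  | ICopy a c => setm m c (m a)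
  | IZero c => setm m c 0%R
  | IInput c => setm m c x
  end.

(* A deterministic online data structure in the group model (for a fixed
   initial forest F): on the history of operations so far (the last one being
   the current operation) it runs a straight-line program on its memory and,
   for a query, returns the index of the cell holding the answer.  Its control
   flow cannot depend on group values. *)
Definition ds := seq op -> seq instr * nat.

Definition input (G : zmodType) (s : seq op) (xs : nat -> G) (t : nat) : G :=
  match onth s t with Some (Upd _) => xs t | _ => 0%R end.

(* memory after executing the first t operations; initially all cells hold 0
   (all initial weights are zero) *)
Fixpoint memAt (G : zmodType) (D : ds) (s : seq op) (xs : nat -> G) (t : nat)
  : nat -> G :=
  match t with
  | 0 => fun _ => 0%R
  | t'.+1 => foldl (exec (input s xs t')) (memAt D s xs t') (D (take t'.+1 s)).1
  end.

Fixpoint weight (G : zmodType) (s : seq op) (xs : nat -> G) (t : nat) (u : V) : G :=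
  match t with
  | 0 => 0%R
  | t'.+1 => match onth s t' with
             | Some (Upd v) => if v == u then xs t' else weight s xs t' u
             | _ => weight s xs t' u
             end
  end.

Definition treesum (G : zmodType) (F : rforest) (s : seq op) (xs : nat -> G)
  (t : nat) (v : V) : G :=
  (\sum_(u in fverts F | fconnected (cur F s t) u v) weight s xs t u)%R.

Definition correct (F : rforest) (D : ds) : Prop :=
  forall (G : zmodType) (s : seq op), legal F s ->
  forall (xs : nat -> G) (t : nat) (v : V), onth s t = Some (Query v) ->
    memAt D s xs t.+1 (D (take t.+1 s)).2 = treesum F s xs t v.

Definition cost (D : ds) (s : seq op) : nat :=
  \sum_(t < size s) sumn (map cost_instr (D (take t.+1 s)).1).

Definition worst_le (F : rforest) (D : ds) (m k : nat) : Prop :=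
  forall s, legal F s -> size s = m -> cost D s <= k.

Definition OPTZ (F : rforest) (m : nat) : nat :=
  epsilon (inhabits 0)
    (fun k => (exists D, correct F D /\ worst_le F D m k) /\
              forall k', (exists D, correct F D /\ worst_le F D m k') -> k <= k').

End Defs.

(* Main.v *)
Require Import Defs.
From mathcomp Require Import all_boot all_algebra.
From mathcomp Require Import zify.
From Stdlib Require Import Classical ClassicalEpsilon FunctionalExtensionality.
Set Implicit Arguments. Unset Strict Implicit. Unset Printing Implicit Defensive.
Import GRing.Theory.

Section Graph.
Variable V : finType.
Implicit Types (F H : rforest V) (u v x y : V).

Definition itp (p : V -> option V) (o : option V) n := iter n (obind p) o.

Lemma itp_None p n : itp p None n = None.
Proof. by elim: n => //= n; rewrite /itp /= => ->. Qed.

Lemma itpD p o n m : itp p o (n + m) = itp p (itp p o m) n.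
Proof. by rewrite /itp iterD. Qed.

Lemma itpS p o n : itp p o n.+1 = obind p (itp p o n).
Proof. by []. Qed.

Definition meet H u v := exists i j x,
  itp (fpar H) (Some u) i = Some x /\ itp (fpar H) (Some v) j = Some x.

Lemma fedge_sym H : symmetric (fedge H).
Proof. by move=> a b; rewrite /fedge andbCA orbC. Qed.

Definition fclosed H := forall u p, u \in fverts H -> fpar H u = Some p -> p \in fverts H.

Lemma it_connect H u i x : fclosed H -> u \in fverts H ->
  itp (fpar H) (Some u) i = Some x -> connect (fedge H) u x /\ x \in fverts H.
Proof.
move=> cH uH; elim: i x => [|i IH] x.
  by rewrite /itp /= => -[<-]; split.
rewrite itpS; case E: (itp _ _ i) => [y|] //= hy.
have [cy yH] := IH y E.
have xH := cH _ _ yH hy.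
split=> //; apply: connect_trans cy (connect1 _).
by rewrite /fedge yH xH hy eqxx.
Qed.

Lemma meet_connect H u v : fclosed H -> u \in fverts H -> v \in fverts H ->
  meet H u v -> connect (fedge H) u v.
Proof.
move=> cH uH vH [i [j [x [hu hv]]]].
have [cu _] := it_connect cH uH hu.
have [cv _] := it_connect cH vH hv.
apply: connect_trans cu _; by rewrite (sym_connect_sym (fedge_sym H)).
Qed.

Lemma meet_trans H a b c : meet H a b -> meet H b c -> meet H a c.
Proof.
move=> [i [j [x [ha hb]]]] [j' [k [y [hb' hc]]]].
case: (leqP j j') => hjj.
  exists (j' - j + i), k, y; split=> //.
  by rewrite itpD ha -hb -itpD subnK.
exists i, (j - j' + k), x; split=> //.
by rewrite itpD hc -hb' -itpD subnK // ltnW.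
Qed.

Lemma connect_meet H u v : connect (fedge H) u v -> meet H u v.
Proof.
move/connectP=> [pth hp ->]; elim: pth u hp => [|b pth IH] u /=.
  by move=> _; exists 0, 0, u.
move/andP=> [e hp]; apply: meet_trans (IH _ hp).
move: e => /and3P[_ _ /orP[/eqP h|/eqP h]].
  by exists 1, 0, b; rewrite /itp /= h.
by exists 0, 1, u; rewrite /itp /= h.
Qed.

Lemma no_cycle F x n : is_rforest F -> x \in fverts F -> 0 < n ->
  itp (fpar F) (Some x) n = Some x -> False.
Proof.
move=> [_ hF] xF n0 hx.
have [N hN] := hF x xF.
have hq : forall q, itp (fpar F) (Some x) (q * n) = Some x.
  by elim=> [|q IH] //; rewrite mulSn itpD IH hx.
have := hq N; rewrite -(subnK (leq_pmulr N n0)) itpD.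
by rewrite /itp in hN *; rewrite hN -/(itp _ None _) itp_None.
Qed.

Lemma min_meet F u v i j i' j' x y : is_rforest F -> x \in fverts F ->
  itp (fpar F) (Some u) i = Some x -> itp (fpar F) (Some v) j = Some x ->
  itp (fpar F) (Some u) i' = Some y -> itp (fpar F) (Some v) j' = Some y ->
  exists a b w, [/\ a <= i, a <= i', b <= j, b <= j' &
    itp (fpar F) (Some u) a = Some w /\ itp (fpar F) (Some v) b = Some w].
Proof.
move=> hF xF hu hv hu' hv'.
case: (leqP i i') => hi; case: (leqP j j') => hj.
- by exists i, j, x; split.
- exfalso.
  have hxy : itp (fpar F) (Some x) (i' - i) = Some y.
    by rewrite -hu -itpD subnK.
  have hyx : itp (fpar F) (Some y) (j - j') = Some x.
    by rewrite -hv' -itpD subnK // ltnW.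
  apply: (no_cycle hF xF (n := j - j' + (i' - i))).
    by rewrite addn_gt0 subn_gt0 hj.
  by rewrite itpD hxy hyx.
- exfalso.
  have hyx : itp (fpar F) (Some y) (i - i') = Some x.
    by rewrite -hu' -itpD subnK // ltnW.
  have hxy : itp (fpar F) (Some x) (j' - j) = Some y.
    by rewrite -hv -itpD subnK.
  apply: (no_cycle hF xF (n := i - i' + (j' - j))).
    by rewrite addn_gt0 subn_gt0 hi.
  by rewrite itpD hxy hyx.
- by exists i', j', y; split=> //; apply: ltnW.
Qed.

Lemma it_sub (p q : V -> option V) : (forall y z, q y = Some z -> p y = Some z) ->
  forall o n x, itp q o n = Some x -> itp p o n = Some x.
Proof.
move=> hpq o; elim=> [|n IH] x //.
rewrite !itpS; case E: (itp q o n) => [y|] //= hy.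
by rewrite (IH _ E) /=; apply: hpq.
Qed.

Lemma it_prefix p o n k : k <= n -> itp p o n <> None -> itp p o k <> None.
Proof.
move=> kn; rewrite -(subnK kn) itpD => h e; apply: h; by rewrite e itp_None.
Qed.

Lemma key_lemma F U s t u v : is_rforest F -> convex F U ->
  u \in U -> u \in fverts F -> v \in U -> v \in fverts F ->
  connect (fedge (cur F s t)) u v -> connect (fedge (induced (cur F s t) U)) u v.
Proof.
move=> hF cvx uU uF vU vF /connect_meet [i [j [x [hu hv]]]].
set H := cur F s t.
have subH : forall y z, fpar H y = Some z -> fpar F y = Some z.
  by move=> y z /=; case: has.
have subFU : forall y z, fpar (induced F U) y = Some z -> fpar F y = Some z.
  move=> y z /=; case: (y \in U) => //; case: (fpar F y) => // q.
  by case: (q \in U).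
have hu' := it_sub subH hu; have hv' := it_sub subH hv.
have cF : connect (fedge F) u v.
  by apply: meet_connect hF.1 uF vF _; exists i, j, x.
have cFU := cvx u v uU vU cF.
case: (connect_meet cFU) => i' [j' [y [hu2 hv2]]].
have [_ xF] := it_connect hF.1 uF hu'.
case: (min_meet hF xF hu' hv' (it_sub subFU hu2) (it_sub subFU hv2))
  => a [b [w [ai ai' bj bj' [hua hvb]]]].
have eqHU : forall z k, z \in U ->
    itp (fpar H) (Some z) k <> None -> itp (fpar (induced F U)) (Some z) k <> None ->
    itp (fpar (induced H U)) (Some z) k = itp (fpar F) (Some z) k.
  move=> z; elim=> [|k IH] zU h1 h2 //.
  have h1' := it_prefix (leqnSn k) h1; have h2' := it_prefix (leqnSn k) h2.
  rewrite !itpS (IH zU h1' h2').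
  case E1: (itp (fpar H) (Some z) k) h1' => [y1|] // _.
  case E2: (itp (fpar (induced F U)) (Some z) k) h2' => [y2|] // _.
  have e1 := it_sub subH E1; have e2 := it_sub subFU E2.
  rewrite e1 in e2; case: e2 => e2; subst y2.
  move: h1 h2; rewrite !itpS E1 E2 e1 /=.
  case: (y1 \in U) => //; case: has => //=; case: (fpar F y1) => // q.
  by case: (q \in U).
have cHU : fclosed (induced H U).
  move=> y0 z; rewrite /= inE => /andP[y0F y0U].
  case: (y0 \in U) => //; case: has => //; case E: (fpar F y0) => [q|] //.
  case: ifP => // qU [<-]; rewrite inE qU andbT; exact: hF.1 _ _ y0F E.
apply: meet_connect cHU _ _ _; rewrite ?inE ?uF ?uU ?vF ?vU //.
exists a, b, w; split.
  rewrite eqHU //; [apply: (it_prefix ai); by rewrite hu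
                   |apply: (it_prefix ai'); by rewrite hu2].
rewrite eqHU //; [apply: (it_prefix bj); by rewrite hv
                 |apply: (it_prefix bj'); by rewrite hv2].
Qed.

End Graph.

Section Transfer.
Variable V : finType.
Implicit Types (F H : rforest V) (u v w : V) (s : seq (op V)).

Lemma take_cat_big s1 s t : take (size s1 + t) (s1 ++ s) = s1 ++ take t s.
Proof. by rewrite take_cat ltnNge leq_addr /= addKn. Qed.

Lemma onth_cat_big s1 s t : onth (s1 ++ s) (size s1 + t) = onth s t.
Proof. by rewrite onth_cat ltnNge leq_addr /= addKn. Qed.

Definition xsh (G : zmodType) s1 (xs : nat -> G) : nat -> G :=
  fun n => if n < size s1 then 0%R else xs (n - size s1).

Lemma xsh_lo (G : zmodType) s1 (xs : nat -> G) n : n < size s1 -> xsh s1 xs n = 0%R.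
Proof. by rewrite /xsh => ->. Qed.

Lemma xsh_hi (G : zmodType) s1 (xs : nat -> G) t : xsh s1 xs (size s1 + t) = xs t.
Proof. by rewrite /xsh ltnNge leq_addr /= addKn. Qed.

Lemma weight_shift (G : zmodType) s1 s (xs : nat -> G) t u :
  weight (s1 ++ s) (xsh s1 xs) (size s1 + t) u = weight s xs t u.
Proof.
have W0 : forall n, n <= size s1 -> weight (s1 ++ s) (xsh s1 xs) n u = 0%R.
  elim=> [|n IH] // hn /=.
  case: onth => [[w|w|w]|]; rewrite ?IH ?(ltnW hn) //.
  by case: ifP => _; rewrite ?xsh_lo ?IH ?(ltnW hn).
elim: t => [|t IH]; first by rewrite addn0 W0.
rewrite addnS /= onth_cat_big.
by case: onth => [[w|w|w]|]; rewrite IH ?xsh_hi.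
Qed.

Lemma input_shift (G : zmodType) s1 s (xs : nat -> G) t :
  input (s1 ++ s) (xsh s1 xs) (size s1 + t) = input s xs t.
Proof. by rewrite /input onth_cat_big; case: onth => [[w|w|w]|] //; rewrite xsh_hi. Qed.

Lemma input_lo (G : zmodType) s1 s (xs : nat -> G) n : n < size s1 ->
  input (s1 ++ s) (xsh s1 xs) n = 0%R.
Proof. by move=> hn; rewrite /input; case: onth => [[w|w|w]|] //; rewrite xsh_lo. Qed.

Lemma foldl_zero (G : zmodType) (l : seq instr) :
  foldl (exec (0 : G)) (fun _ => 0%R) l = (fun _ => 0%R).
Proof.
elim: l => [|a l IH] //=.
suff -> : exec (0 : G) (fun _ => 0%R) a = (fun _ => 0%R) by [].
apply: functional_extensionality => k.
by case: a => *; rewrite /= /setm; case: ifP; rewrite ?addr0 ?subr0.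
Qed.

Lemma mem_shift (G : zmodType) (D : ds V) s1 s (xs : nat -> G) t :
  memAt D (s1 ++ s) (xsh s1 xs) (size s1 + t) = memAt (fun h => D (s1 ++ h)) s xs t.
Proof.
have M0 : forall n, n <= size s1 -> memAt D (s1 ++ s) (xsh s1 xs) n = (fun _ => 0%R).
  elim=> [|n IH] // hn /=.
  by rewrite IH ?(ltnW hn) // input_lo // foldl_zero.
elim: t => [|t IH]; first by rewrite addn0 M0.
by rewrite addnS /= IH input_shift -addnS take_cat_big.
Qed.

Lemma onth_nthS (T : Type) (x0 : T) (s : seq T) i : i < size s -> onth s i = Some (nth x0 s i).
Proof. by move=> hi; rewrite onthE (nth_map x0). Qed.

Lemma nocut F Ua s1 w : legal (induced F Ua) s1 -> w \notin Ua -> has (is_cut w) s1 = false.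
Proof.
move=> l1 wU; apply: negbTE; apply/negP; case/(has_nthP (Cut w)) => k hk.
have := l1 k; rewrite (onth_nthS (Cut w) hk).
case: (nth (Cut w) s1 k) => // w' [] + _ /eqP e; subst w'.
by rewrite inE (negbTE wU) andbF.
Qed.

Lemma legal_cat F Ua Ub s1 s : Ua :&: Ub = set0 ->
  legal (induced F Ua) s1 -> legal (induced F Ub) s -> legal F (s1 ++ s).
Proof.
move=> dis l1 l2 T; rewrite onth_cat; case: ltnP => hT.
  have := l1 T; case: onth => [[w|w|w]|] //; rewrite ?inE; last 2 first.
  - by case/andP.
  - by case/andP.
  move=> [/andP[wF _] hp].
  split=> //; rewrite /= take_cat hT; move: hp => /=.
  by case: has => //; case: (w \in Ua) => //; case: (fpar F w).
have := l2 (T - size s1); case: onth => [[w|w|w]|] //; rewrite ?inE; last 2 first.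
- by case/andP.
- by case/andP.
move=> [/andP[wF wU] hp].
split=> //; rewrite /= take_cat ltnNge hT /= has_cat.
have wUa : w \notin Ua.
  apply/negP => wUa; have : w \in Ua :&: Ub by rewrite inE wUa.
  by rewrite dis inE.
rewrite (nocut l1 wUa) /=; move: hp => /=.
by case: has => //; case: (w \in Ub) => //; case: (fpar F w).
Qed.

Lemma weight_out (G : zmodType) F Ub s (xs : nat -> G) t u :
  legal (induced F Ub) s -> u \notin Ub -> weight s xs t u = 0%R.
Proof.
move=> ls uU; elim: t => [|t IH] //=.
case E: onth => [[w|w|w]|] //; case: eqP => // e; subst w.
by have := ls t; rewrite E inE (negbTE uU) andbF.
Qed.

Lemma fedge_eq H1 H2 : fverts H1 = fverts H2 -> fpar H1 =1 fpar H2 -> fedge H1 =2 fedge H2.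
Proof. by move=> e p a b; rewrite /fedge e !p. Qed.

Lemma par_induced_sub H U y z : fpar (induced H U) y = Some z -> fpar H y = Some z.
Proof.
move=> /=; case: (y \in U) => //; case: (fpar H y) => // q.
by case: (q \in U).
Qed.

Lemma fedge_induced_sub H U a b : fedge (induced H U) a b -> fedge H a b.
Proof.
rewrite /fedge /= !inE => /and3P [/andP[aH _] /andP[bH _] e]; rewrite aH bH /=.
by case/orP: e => /eqP /par_induced_sub ->; rewrite eqxx ?orbT.
Qed.

Lemma transfer F Ua Ub s1 (D : ds V) : is_rforest F -> convex F Ub -> Ua :&: Ub = set0 ->
  correct F D -> legal (induced F Ua) s1 -> correct (induced F Ub) (fun h => D (s1 ++ h)).
Proof.
move=> hF cvx dis cD l1 G s ls xs t v hq.
have hl := legal_cat dis l1 ls.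
have := cD G (s1 ++ s) hl (xsh s1 xs) (size s1 + t) v.
rewrite onth_cat_big -addnS mem_shift take_cat_big => /(_ hq) ->.
rewrite /treesum.
have [vF vU] : v \in fverts F /\ v \in Ub.
  by have := ls t; rewrite hq inE => /andP.
under eq_bigr do rewrite weight_shift.
rewrite (bigID (fun u => u \in Ub)) /= [X in (_ + X)%R]big1 ?addr0; last first.
  by move=> u /andP[_ uU]; apply: weight_out ls uU.
apply: eq_bigl => u; rewrite inE.
case: (boolP (u \in fverts F)) => uF //=; case: (boolP (u \in Ub)) => uU; rewrite ?andbF //.
rewrite andbT /fconnected.
have ee : fedge (cur (induced F Ub) s t) =2 fedge (induced (cur F (s1 ++ s) (size s1 + t)) Ub).
  apply: fedge_eq => // w /=.
  rewrite take_cat_big has_cat.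
  case: (boolP (w \in Ub)) => wU.
    have wUa : w \notin Ua.
      apply/negP => wUa; have : w \in Ua :&: Ub by rewrite inE wUa.
      by rewrite dis inE.
    by rewrite (nocut l1 wUa) /=; case: has.
  by case: has.
rewrite (eq_connect ee); apply/idP/idP.
  by apply: key_lemma.
apply: connect_sub => a b e; apply: connect1; exact: fedge_induced_sub e.
Qed.

End Transfer.

Section Rest.
Variable V : finType.
Implicit Types (F H : rforest V) (u v w : V) (s : seq (op V)).

Lemma cost_cat (D : ds V) s1 s2 :
  cost D (s1 ++ s2) = cost D s1 + cost (fun h => D (s1 ++ h)) s2.
Proof.
rewrite /cost size_cat big_split_ord /=; congr (_ + _); apply: eq_bigr => i _.
  rewrite take_cat; case: ltnP => h //.
  have e : i.+1 = size s1 by apply/eqP; rewrite eqn_leq h ltn_ord.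
  by rewrite e subnn take0 cats0 take_size.
by rewrite /= -addnS take_cat_big.
Qed.

Lemma cost_nil (D : ds V) : cost D [::] = 0.
Proof. by rewrite /cost big_ord0. Qed.

Lemma legal_nil F : legal F [::].
Proof. by move=> t; rewrite onth0n. Qed.

Lemma legal_pad F s v0 n : legal F s -> v0 \in fverts F ->
  legal F (s ++ nseq n (Query v0)).
Proof.
move=> ls v0F T; rewrite onth_cat; case: ltnP => hT.
  have := ls T; case: onth => [[w|w|w]|] //.
  by move=> [wF hp]; split=> //; rewrite /= take_cat hT.
by rewrite onth_nseq; case: ifP.
Qed.

Definition idx u : nat := enum_rank u.
Definition outc : nat := #|V|.

Lemma idx_inj : injective idx.
Proof. by move=> a b /val_inj /enum_rank_inj. Qed.

Lemma idx_out u : (idx u == outc) = false.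
Proof. by apply/negbTE; rewrite neq_ltn /idx /outc ltn_ord. Qed.

Definition cutF F (h : seq (op V)) : rforest V :=
  RForest (fverts F) (fun w => if has (is_cut w) h then None else fpar F w).

Definition NP F h v : pred V := fun u => (u \in fverts F) && connect (fedge (cutF F h)) u v.

Definition naive F : ds V := fun h =>
  match rev h with
  | Query v :: r => (IZero outc :: [seq IAdd outc (idx u) outc | u <- enum (NP F (rev r) v)], outc)
  | Upd v :: _ => ([:: IInput (idx v)], 0)
  | _ => ([::], 0)
  end.

Lemma fold_adds (G : zmodType) (x : G) (l : seq V) (m : nat -> G) :
  (forall k, k != outc -> foldl (exec x) m [seq IAdd outc (idx u) outc | u <- l] k = m k) /\
  foldl (exec x) m [seq IAdd outc (idx u) outc | u <- l] outc
    = (m outc + \sum_(u <- l) m (idx u))%R.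
Proof.
elim: l m => [|a l IH] m /=; first by rewrite big_nil addr0.
have [IH1 IH2] := IH (exec x m (IAdd outc (idx a) outc)).
split.
  by move=> k hk; rewrite IH1 // /= /setm (negbTE hk).
rewrite IH2 big_cons /= /setm eqxx.
under eq_bigr do rewrite idx_out.
by rewrite addrA.
Qed.

Lemma sumn_adds (l : seq V) : sumn (map cost_instr [seq IAdd outc (idx u) outc | u <- l]) = size l.
Proof. by elim: l => //= a l ->. Qed.

Lemma take_last s t o : onth s t = Some o -> take t.+1 s = rcons (take t s) o.
Proof.
move=> h; have ht : t < size s by rewrite -onthTE h.
by rewrite (take_nth o ht); congr rcons; exact: onth_nth h.
Qed.

Lemma naive_inv F (G : zmodType) s (xs : nat -> G) t : t <= size s ->
  forall u, memAt (naive F) s xs t (idx u) = weight s xs t u.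
Proof.
elim: t => [|t IH] ht u //.
have ht' : t < size s by [].
have hon := onth_nthS (Query u) ht'.
rewrite /= hon (take_last hon) /naive rev_rcons.
case: (nth (Query u) s t) hon => w hon /=.
- exact: IH (ltnW ht) u.
- rewrite /setm /input hon (inj_eq idx_inj) eq_sym.
  by case: eqP => // _; apply: IH (ltnW ht) u.
- have [h1 _] := fold_adds (input s xs t) (enum (NP F (rev (rev (take t s))) w))
                   (setm (memAt (naive F) s xs t) outc 0%R).
  by rewrite h1 ?idx_out // /setm idx_out; apply: IH (ltnW ht) u.
Qed.

Lemma naive_correct F : correct F (naive F).
Proof.
move=> G s _ xs t v hq.
have ht : t < size s by rewrite -onthTE hq.
rewrite /= (take_last hq) /naive rev_rcons /= revK.
have [_ h2] := fold_adds (input s xs t) (enum (NP F (take t s) v))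
                 (setm (memAt (naive F) s xs t) outc 0%R).
rewrite h2 /setm eqxx add0r.
under eq_bigr do rewrite idx_out naive_inv ?(ltnW ht) //.
by rewrite big_enum /treesum; apply: eq_bigl => u; rewrite unfold_in.
Qed.

Lemma naive_step F h : sumn (map cost_instr (naive F h).1) <= #|V|.
Proof.
rewrite /naive; case: (rev h) => [|[w|w|w] r] //=.
by rewrite sumn_adds -cardE max_card.
Qed.

Lemma naive_worst F m : worst_le F (naive F) m (m * #|V|).
Proof.
move=> s _ <-; rewrite /cost.
apply: (@leq_trans (\sum_(t < size s) #|V|)).
  by apply: leq_sum => t _; exact: naive_step.
by rewrite sum_nat_const card_ord.
Qed.

Lemma min_exists (P : nat -> Prop) : (exists n, P n) -> exists n, P n /\ forall k, P k -> n <= k.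
Proof.
move=> [n Pn]; elim/ltn_ind: n Pn => n IH Pn.
case: (classic (exists k, k < n /\ P k)) => [[k [kn Pk]]|H].
  exact: IH k kn Pk.
exists n; split=> // k Pk; rewrite leqNgt; apply/negP => kn; apply: H; by exists k.
Qed.

Lemma OPTZ_spec F m :
  (exists D, correct F D /\ worst_le F D m (OPTZ F m)) /\
  (forall k', (exists D, correct F D /\ worst_le F D m k') -> OPTZ F m <= k').
Proof.
rewrite /OPTZ.
apply: (epsilon_spec (inhabits 0) (fun k => (exists D, correct F D /\ worst_le F D m k) /\
   forall k', (exists D, correct F D /\ worst_le F D m k') -> k <= k')).
apply: min_exists.
exists (m * #|V|), (naive F); split; [exact: naive_correct | exact: naive_worst].
Qed.

Lemma dich F m (D : ds V) : correct F D ->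
  exists s, [/\ legal F s, size s <= m & OPTZ F m <= cost D s].
Proof.
move=> cD; have [_ mn] := OPTZ_spec F m.
case: (classic (exists s, [/\ legal F s, size s = m & OPTZ F m <= cost D s])).
  by move=> [s [l e c]]; exists s; rewrite e.
move=> H.
have w : worst_le F D m (OPTZ F m - 1).
  move=> s l e; have : ~ (OPTZ F m <= cost D s) by move=> c; apply: H; exists s.
  by move/negP; rewrite -ltnNge; lia.
have := mn _ (ex_intro _ D (conj cD w)) => le.
exists [::]; split=> //; [exact: legal_nil | lia].
Qed.

End Rest.

Theorem lemma20 (V : finType) (F : rforest V) (U1 U2 : {set V}) (m1 m2 : nat) :
  is_rforest F ->
  U1 :&: U2 = set0 -> U1 :|: U2 = fverts F ->
  convex F U1 -> convex F U2 ->
  OPTZ (induced F U1) m1 + OPTZ (induced F U2) m2 <= OPTZ F (m1 + m2).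
Proof.
move=> hF dis _ cv1 cv2.
have [[D [cD wD]] _] := OPTZ_spec F (m1 + m2).
have dis21 : U2 :&: U1 = set0 by rewrite setIC.
have cD1 : correct (induced F U1) D := transfer hF cv1 dis21 cD (legal_nil _).
have [s1 [l1 sz1 c1]] := dich m1 cD1.
have cD2 := transfer hF cv2 dis cD l1.
have [s2 [l2 sz2 c2]] := dich m2 cD2.
have ls := legal_cat dis l1 l2.
have cs : OPTZ (induced F U1) m1 + OPTZ (induced F U2) m2 <= cost D (s1 ++ s2).
  by rewrite cost_cat leq_add.
case: (posnP (OPTZ (induced F U1) m1 + OPTZ (induced F U2) m2)) => [-> //|pos].
have [v0 v0F] : exists v0, v0 \in fverts F.
  case E: (s1 ++ s2) cs => [|o r]; first by rewrite cost_nil; lia.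
  move=> _; have := ls 0; rewrite E /=; clear E.
  by case: o => w; [case=> wF _ | move=> wF | move=> wF]; exists w.
have szs : size (s1 ++ s2) <= m1 + m2 by rewrite size_cat leq_add.
apply: leq_trans cs _.
apply: leq_trans (wD _ (legal_pad (m1 + m2 - size (s1 ++ s2)) ls v0F) _).
  rewrite (cost_cat D (s1 ++ s2)); exact: leq_addr.
by rewrite [size (_ ++ nseq _ _)]size_cat seq.size_nseq subnKC.
Qed.
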